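(* Let $a,b,v$ be integers with $b>a\ge2$ and $v\ge2$, let $u=2$, and set $X:=ab-a-b$. Then $a,b,u,v$ satisfy (1) $a$, $b$ and $2v-1$ are pairwise coprime; (2) $\frac{1}{a}+\frac{1}{b}+\frac{v}{2v-1}>1$; (3) $vab-1=(2v-1)X$, if and only if the triple $(a,b,2v-1)$ is one of $(3,14,5)$, $(3,10,7)$, $(3,8,11)$, $(3,7,19)$, $(4,11,3)$, $(4,5,9)$, $(5,7,3)$. *)

(* Defs.v *)
From mathcomp Require Import all_boot all_order all_algebra.
Set Implicit Arguments. Unset Strict Implicit. Unset Printing Implicit Defensive.
Import Order.TTheory GRing.Theory Num.Theory.

(* Main.v *)
Require Import Defs.
From mathcomp Require Import all_boot all_order all_algebra.
From mathcomp Require Import zify.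
Import Order.TTheory GRing.Theory Num.Theory.
Local Open Scope ring_scope.

Ltac splitall H := match type of H with
  | _ \/ _ => destruct H as [H|H]; [|splitall H]
  | _ => idtac end.

Ltac finish := first [exfalso; lia | by vm_compute].

Lemma fwd (a b v : int) (hab : a < b) (ha : 2 <= a) (hv : 2 <= v) :
  v * a * b - 1 = (2 * v - 1) * (a * b - a - b) ->
  (a, b, 2 * v - 1) \in
    [:: (3, 14, 5); (3, 10, 7); (3, 8, 11); (3, 7, 19);
        (4, 11, 3); (4, 5, 9); (5, 7, 3)].
Proof.
move=> e.
have E: (v-1)*a*b + 1 = (2*v-1)*(a+b) by nia.
have h1: (v-1)*a*b < 2*(2*v-1)*b by nia.
have h2: (v-1)*a < 2*(2*v-1) by nia.
have a5: a <= 5 by nia.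
have : a = 2 \/ a = 3 \/ a = 4 \/ a = 5 by lia.
case=> [ea|[ea|[ea|ea]]]; subst a.
- exfalso; nia.
- have v3: v >= 3 by nia.
  have F: (b-6)*(v-2) = 8 by nia.
  have hb6: b > 6 by nia.
  have hv10: v <= 10 by nia.
  have hb14: b <= 14 by nia.
  have H: v = 3 \/ v = 4 \/ v = 5 \/ v = 6 \/ v = 7 \/ v = 8 \/ v = 9 \/ v = 10 by lia.
  splitall H; subst v;
  (have H: b = 7 \/ b = 8 \/ b = 9 \/ b = 10 \/ b = 11 \/ b = 12 \/ b = 13 \/ b = 14 by lia);
  splitall H; subst b; finish.
- have F: b*(2*v-3) = 8*v-5 by nia.
  have hv5: v <= 5 by nia.
  have hb: b <= 11 by nia.
  have H: v = 2 \/ v = 3 \/ v = 4 \/ v = 5 by lia.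
  splitall H; subst v;
  (have H: b = 5 \/ b = 6 \/ b = 7 \/ b = 8 \/ b = 9 \/ b = 10 \/ b = 11 by lia);
  splitall H; subst b; finish.
- have ev : v = 2 by nia.
  subst v.
  have -> : b = 7 by lia. by vm_compute.
Qed.

Theorem lemma3p6 (a b v : int) (hab : a < b) (ha : 2 <= a) (hv : 2 <= v) :
  [/\ coprimez a b, coprimez a (2 * v - 1) & coprimez b (2 * v - 1)] /\
  (1 / a%:~R + 1 / b%:~R + v%:~R / (2 * v - 1)%:~R > 1 :> rat) /\
  v * a * b - 1 = (2 * v - 1) * (a * b - a - b)
  <->
  (a, b, 2 * v - 1) \in
    [:: (3, 14, 5); (3, 10, 7); (3, 8, 11); (3, 7, 19);
        (4, 11, 3); (4, 5, 9); (5, 7, 3)].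
Proof.
split; first by case=> _ [_]; exact: fwd.
rewrite !inE !xpair_eqE.
move=> /orP[H|/orP[H|/orP[H|/orP[H|/orP[H|/orP[H|H]]]]]];
  move: H => /andP[/andP[/eqP ea /eqP eb] /eqP ev];
  (have H: v = 2 \/ v = 3 \/ v = 4 \/ v = 5 \/ v = 6 \/ v = 10 by lia);
  splitall H; subst; first [exfalso; lia | vm_compute; do !split].
Qed.
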